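(* Let $P_n$ be a labeled path with ad-pattern $w=w_1\cdots w_{n-1}$. Suppose that at least one of the following holds: (i) $RT(P_n)$ contains a $(3,1,1)$ sub-ribbon, i.e. $w$ contains $aadd$ as a factor (consecutive letters); (ii) $RT(P_n)$ begins with a $(2,1,1)$ sub-ribbon, i.e. $w$ begins with $add$; (iii) $RT(P_n)$ ends with a $(3,1)$ sub-ribbon, i.e. $w$ ends with $aad$. Then $X(P_n;\mathbf{x},q)$ is not symmetric.
   Context: A labeled path $P_n$ is the path graph with vertices $v_1,\dots,v_n$ (edges $v_iv_{i+1}$) where $v_i$ carries label $\sigma_i$ for a permutation $\sigma$ of $[n]$; vertices are identified with labels. A proper coloring is $c\colon[n]\to\{1,2,\dots\}$ with adjacent vertices colored differently; $\operatorname{asc}(c)=\#\{ij\in E: i<j,\ c(i)<c(j)\}$. The CQF is $X(P_n;\mathbf{x},q)=\sum_{c \text{ proper}} x_{c(1)}\cdots x_{c(n)}q^{\operatorname{asc}(c)}$; it is symmetric if each coefficient of $q^k$ is a symmetric function. The ad-pattern of $P_n$ is $w_1\cdots w_{n-1}$ with $w_i=a$ if $\sigma_i<\sigma_{i+1}$ and $w_i=d$ otherwise. The ribbon diagram $RT(P_n)$: start with box $1$, and for $i=1,\dots,n-1$ place box $i+1$ immediately right of box $i$ if $w_i=a$ and immediately above box $i$ if $w_i=d$. A $\beta$ sub-ribbon is a set of consecutive boxes whose shape is the ribbon with row lengths $\beta$ (bottom to top). *)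

(* Defs.v *)
From mathcomp Require Import all_boot all_fingroup.
Set Implicit Arguments. Unset Strict Implicit. Unset Printing Implicit Defensive.

(* A labeled path P_n: positions 0..n-1 (v_1..v_n), the vertex at position i
   carries label (sigma i : 'I_n); labels 0..n-1 stand for 1..n (order preserved).
   Vertices are identified with their labels, i.e. with elements of 'I_n. *)

Definition path_labels (n : nat) (sigma : 'S_n) : seq nat :=
  [seq (sigma i : nat) | i <- enum 'I_n].

(* ad-pattern w_1 ... w_{n-1}: true = a (ascent), false = d (descent). *)
Definition adpat (n : nat) (sigma : 'S_n) : seq bool :=
  let l := path_labels sigma in [seq x.1 < x.2 | x <- zip l (behead l)].

Definition consec (n : nat) (i j : 'I_n) : bool := (j : nat) == i.+1.

(* A coloring with colors 'I_m (color j stands for the variable x_{j+1}). *)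
Definition proper (n m : nat) (sigma : 'S_n) (c : {ffun 'I_n -> 'I_m}) : bool :=
  [forall i : 'I_n, forall j : 'I_n, consec i j ==> (c (sigma i) != c (sigma j))].

Definition asc (n m : nat) (sigma : 'S_n) (c : {ffun 'I_n -> 'I_m}) : nat :=
  #|[set p : 'I_n * 'I_n | consec p.1 p.2 &&
      (let u := sigma p.1 in let v := sigma p.2 in
       ((u < v) && (c u < c v)) || ((v < u) && (c v < c u)))]|.

(* Coefficient of q^k x_1^{s_0} x_2^{s_1} ... x_r^{s_{r-1}} in X(P_n; x, q),
   where s : seq nat and r = size s.  Colorings with this content only use the
   colors 1..r, so counting maps 'I_n -> 'I_r is exact. *)
Definition cqf_coeff (n : nat) (sigma : 'S_n) (k : nat) (s : seq nat) : nat :=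
  #|[set c : {ffun 'I_n -> 'I_(size s)} | proper sigma c && (asc sigma c == k) &&
      [forall j : 'I_(size s), #|[set v | c v == j]| == nth 0 s j]]|.

(* Each coefficient of q^k is a symmetric function: invariant under permuting
   the variables (any finitary permutation of the variables moves only finitely
   many indices, so it suffices to permute x_1..x_r for every exponent vector
   of length r, padding with zero exponents allowed). *)
Definition cqf_symmetric (n : nat) (sigma : 'S_n) : Prop :=
  forall (k : nat) (s : seq nat) (pi : 'S_(size s)),
    cqf_coeff sigma k s = cqf_coeff sigma k [seq nth 0 s (pi j) | j <- enum 'I_(size s)].

(* Main.v *)
Require Import Defs.
From mathcomp Require Import all_boot all_fingroup.
From mathcomp Require Import zify.
Set Implicit Arguments. Unset Strict Implicit. Unset Printing Implicit Defensive.

Section Aux.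
Variables (n : nat) (sigma : 'S_n).

Definition wl k := nth false (adpat sigma) k.
Definition turn k := (0 < k) && (k < n.-1) && (wl k.-1 != wl k).
Fixpoint taken k := if k is k'.+1 then turn k && ~~ taken k' else false.
Fixpoint bb k : nat :=
  if k is k'.+1 then (if taken k' then n else if wl k' then (bb k').+1 else (bb k').-1)
  else n.

Lemma takenE k : 0 < k -> taken k = turn k && ~~ taken k.-1.
Proof. by case: k. Qed.

Lemma taken_turn k : taken k -> turn k.
Proof. by case: k => //= k /andP[]. Qed.

Lemma bb_inv k : k < n ->
  (n - k <= bb k <= n + k) /\
  (0 < k -> if taken k.-1 then bb k = n else if wl k.-1 then n < bb k else bb k < n).
Proof.
elim: k => [|k IH] Hk /=; first by split => //; lia.
have [/andP[H1 H2] IH2] := IH (ltnW Hk).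
case Ht: (taken k); first by split => //; lia.
have Hnt : ~~ taken k by rewrite Ht.
have Hk1 : (k < n.-1) = true by apply/idP; lia.
case Hw: (wl k).
- have Hge : n <= bb k.
    case: (posnP k) => [->//|Hk0].
    move: (IH2 Hk0); case Htk: (taken k.-1); first by move=> ->.
    case Hwk: (wl k.-1); first by move=> /ltnW.
    move=> _.
    exfalso; move: Ht; rewrite takenE // /turn Hwk Hw Htk Hk0 Hk1.
    by [].
  split; lia.
- have Hle : bb k <= n.
    case: (posnP k) => [->//|Hk0].
    move: (IH2 Hk0); case Htk: (taken k.-1); first by move=> ->.
    case Hwk: (wl k.-1); last by move=> /ltnW.
    move=> _.
    exfalso; move: Ht; rewrite takenE // /turn Hwk Hw Htk Hk0 Hk1.
    by [].
  split; lia.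
Qed.

Lemma bb_strict k : k.+1 < n -> if wl k then bb k < bb k.+1 else bb k.+1 < bb k.
Proof.
move=> Hk.
have [/andP[H1 H2] _] := bb_inv (ltnW Hk).
rewrite /=.
case Ht: (taken k).
- have Hk0 : 0 < k by case: k Ht {Hk H1 H2}.
  have := taken_turn Ht; rewrite /turn => /andP[_ Hne].
  move: Ht; rewrite takenE // => /andP[_ Hnt].
  have [_ I2] := bb_inv (ltnW Hk); move: (I2 Hk0).
  rewrite (negbTE Hnt).
  by case: (wl k.-1) Hne; case: (wl k).
- case: (wl k) => //; lia.
Qed.


Lemma taken_ge k : n.-1 <= k -> taken k = false.
Proof.
move=> H; apply/negbTE/negP => /taken_turn; rewrite /turn => /andP[/andP[_ H2] _]; lia.
Qed.

Lemma sum_zero N : n = N.+1 ->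
  \sum_(i < N.+1) (bb i == n) = 1 + \sum_(i < N.+1) taken i.
Proof.
move=> En.
rewrite big_ord_recl big_ord_recr /= eqxx (@taken_ge N) ?En // addn0.
congr (_ + _); apply: eq_bigr => i _.
have Hi : bump 0 i < n by rewrite /bump /=; move: (ltn_ord i); lia.
have [_ I2] := bb_inv Hi.
move: (I2 isT) => /=.
rewrite add0n -En; case: (taken i); first by rewrite eqxx.
case: (wl i) => H; apply/eqP; lia.
Qed.

Lemma turn_ge k : n.-1 <= k -> turn k = false.
Proof. by move=> H; rewrite /turn; apply/negbTE; apply/negP => /andP[/andP[_ ?] _]; lia. Qed.

Lemma turn_taken_ineq N j0 : n = N.+1 -> j0 < n -> taken j0 -> ~~ turn j0.+1 ->
  \sum_(i < N.+1) turn i < 2 * \sum_(i < N.+1) taken i.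
Proof.
move=> En Hj Htj Htu.
have E1 : \sum_(i < N.+1) turn i =
   \sum_(i < N.+1) taken i + \sum_(i < N.+1) (turn i.+1 && taken i).
  rewrite -big_split /=.
  transitivity (\sum_(i < N.+1) (taken i + (turn i && taken i.-1))).
    apply: eq_bigr => i _; case: (posnP i) => [->//|Hi0].
    rewrite (takenE Hi0); by case: (turn i); case: (taken i.-1).
  rewrite big_split /= big_split /=; congr (_ + _).
  rewrite big_ord_recl [RHS]big_ord_recr /= (@turn_ge N.+1) ?En // andFb add0n addn0.
  by apply: eq_bigr.
have E2 : \sum_(i < N.+1) taken i =
   \sum_(i < N.+1) (turn i.+1 && taken i) + \sum_(i < N.+1) (taken i && ~~ turn i.+1).
  rewrite -big_split /=; apply: eq_bigr => i _.
  by case: (turn i.+1); case: (taken i).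
have E3 : 0 < \sum_(i < N.+1) (taken i && ~~ turn i.+1).
  have Hj' : j0 < N.+1 by rewrite -En.
  by rewrite (bigD1 (Ordinal Hj')) //= Htj Htu.
lia.
Qed.

Definition peak i := ((i == 0) || wl i.-1) && ((i == n.-1) || ~~ wl i).
Definition valley i := ((i == 0) || ~~ wl i.-1) && ((i == n.-1) || wl i).

Lemma PV N : n = N.+2 ->
  \sum_(i < N.+2) (peak i + valley i) = 2 + \sum_(i < N.+2) turn i.
Proof.
move=> En.
transitivity (\sum_(i < N.+2) (turn i + ((i == 0 :> nat) + (i == N.+1 :> nat)))).
  apply: eq_bigr => i _; rewrite /peak /valley /turn En /=.
  have Hi := ltn_ord i.
  have [->|Hi0] := eqVneq (i : nat) 0.
    by rewrite /=; case: (wl 0).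
  have [Hin|Hin] := eqVneq (i : nat) N.+1.
    rewrite Hin /= ltnn /=; by case: (wl N).
  have H1 : (0 < i) = true by apply/idP; lia.
  have H2 : (i < N.+1) = true by apply/idP; lia.
  rewrite H1 H2 /= !addn0.
  by case: (wl i.-1); case: (wl i).
rewrite big_split /= big_split /= addnC; congr (_ + _).
rewrite big_ord_recl /= big1; last by [].
rewrite big_ord_recr /= eqxx big1 //=.
move=> i _; rewrite /bump /=; apply/eqP; move: (ltn_ord i); lia.
Qed.

Lemma size_adpat : size (adpat sigma) = n.-1.
Proof.
rewrite /adpat size_map size_zip size_behead /path_labels size_map size_enum_ord.
by case: n sigma => //= m _; rewrite minnE subKn // leqnSn.
Qed.

Lemma nth_labels (i : 'I_n) : nth 0 (path_labels sigma) i = sigma i.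
Proof.
by rewrite /path_labels (nth_map i) ?size_enum_ord // nth_ord_enum.
Qed.

Lemma wlE (i : 'I_n) (h : i.+1 < n) : wl i = (sigma i < sigma (Ordinal h)).
Proof.
have Hs : i < size (zip (path_labels sigma) (behead (path_labels sigma))).
  rewrite size_zip size_behead /path_labels size_map size_enum_ord; lia.
rewrite /wl /adpat (nth_map (0,0)) // nth_zip_cond Hs /= nth_behead.
rewrite nth_labels.
by rewrite -(nth_labels (Ordinal h)).
Qed.

End Aux.

Lemma sum_eq_nat n m : \sum_(j < n) ((j : nat) == m) = (m < n).
Proof.
elim: n => [|n IH]; first by rewrite big_ord0.
rewrite big_ord_recr /= IH.
case: eqP => H.
- subst; rewrite ltnn ltnSn; lia.
- have E : (m < n.+1) = (m < n) :> bool by apply/idP/idP => h; lia.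
  by rewrite addn0 E.
Qed.

Lemma card_E n : #|[set p : 'I_n * 'I_n | consec p.1 p.2]| = n.-1.
Proof.
rewrite -sum1dep_card big_mkcond /=.
rewrite -(pair_big xpredT xpredT (fun i j => if consec (i : 'I_n) (j : 'I_n) then 1 else 0)) /=.
transitivity (\sum_(i < n) (i.+1 < n)).
  apply: eq_bigr => i _; rewrite -(sum_eq_nat n i.+1); apply: eq_bigr => j _.
  by rewrite /consec; case: (_ == _).
case: n => [|n]; first by rewrite big_ord0.
rewrite big_ord_recr /= ltnn addn0.
rewrite (eq_bigr (fun _ => 1)); last by move=> i _; rewrite ltnS ltn_ord.
by rewrite sum1_card card_ord.
Qed.

Definition edge_ok n m (sigma : 'S_n) (c : {ffun 'I_n -> 'I_m}) (i j : 'I_n) :=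
  let u := sigma i in let v := sigma j in
  ((u < v) && (c u < c v)) || ((v < u) && (c v < c u)).

Lemma asc_full n m (sigma : 'S_n) (c : {ffun 'I_n -> 'I_m}) :
  asc sigma c = n.-1 -> forall i j : 'I_n, consec i j -> edge_ok sigma c i j.
Proof.
move=> Ha i j Hij.
set A := [set p : 'I_n * 'I_n | consec p.1 p.2 &&
      (let u := sigma p.1 in let v := sigma p.2 in
       ((u < v) && (c u < c v)) || ((v < u) && (c v < c u)))].
set E := [set p : 'I_n * 'I_n | consec p.1 p.2].
have HAE : A \subset E by apply/subsetP => p; rewrite !inE => /andP[].
have HAE' : A == E by rewrite eqEcard HAE /= card_E -Ha.
have : (i, j) \in A by rewrite (eqP HAE') inE.
by rewrite inE /= Hij.
Qed.

Lemma asc_all n m (sigma : 'S_n) (c : {ffun 'I_n -> 'I_m}) :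
  (forall i j : 'I_n, consec i j -> edge_ok sigma c i j) -> asc sigma c = n.-1.
Proof.
move=> H; rewrite /asc -(card_E n); apply: eq_card => p; rewrite !inE.
case Hc: (consec p.1 p.2) => //=; exact: H.
Qed.

Lemma extreme_le n m (sigma : 'S_n) (c : {ffun 'I_n -> 'I_m}) (t : 'I_m) (P : pred nat) :
  asc sigma c = n.-1 ->
  (forall i : 'I_n, c (sigma i) = t -> P i) ->
  #|[set v | c v == t]| <= #|[set i : 'I_n | P i]|.
Proof.
move=> Ha HP.
rewrite -(card_imset [set i : 'I_n | P i] (@perm_inj _ sigma)).
apply: subset_leq_card; apply/subsetP => v; rewrite inE => /eqP Hv.
rewrite -(permKV sigma v); apply: imset_f; rewrite inE; apply: HP.
by rewrite permKV.
Qed.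

Lemma top_peak n m (sigma : 'S_n) (c : {ffun 'I_n -> 'I_m}) (t : 'I_m) :
  asc sigma c = n.-1 -> (forall x : 'I_m, x <= t) ->
  #|[set v | c v == t]| <= #|[set i : 'I_n | peak sigma i]|.
Proof.
move=> Ha Ht; eapply extreme_le; first exact: (Ha); move=> i Hi.
rewrite /peak; apply/andP; split.
- case: (posnP i) => [->//|Hi0]; apply/orP; right.
  have Hj : i.-1 < n by move: (ltn_ord i); lia.
  have Hji : (Ordinal Hj).+1 < n by rewrite /= prednK.
  have Eji : Ordinal Hji = i by apply: val_inj; rewrite /= prednK.
  have := asc_full Ha (i:=Ordinal Hj) (j:=i).
  rewrite /consec /= prednK // eqxx => /(_ isT).
  rewrite /edge_ok Hi => /orP[/andP[H _]|/andP[_ H]].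
  + by rewrite (@wlE n sigma (Ordinal Hj) Hji) Eji.
  + by move: (Ht (c (sigma (Ordinal Hj)))); rewrite leqNgt H.
- case: (ltngtP i.+1 n) => Hin; last by apply/orP; left; apply/eqP; lia.
  + apply/orP; right.
    have := asc_full Ha (i:=i) (j:=Ordinal Hin).
    rewrite /consec /= eqxx => /(_ isT).
    rewrite /edge_ok Hi => /orP[/andP[_ H]|/andP[H _]].
    * by move: (Ht (c (sigma (Ordinal Hin)))); rewrite leqNgt H.
    * by rewrite (@wlE n sigma i Hin) -leqNgt ltnW.
  + by move: (ltn_ord i); lia.
Qed.

Lemma bot_valley n m (sigma : 'S_n) (c : {ffun 'I_n -> 'I_m}) (t : 'I_m) :
  asc sigma c = n.-1 -> (forall x : 'I_m, t <= x) ->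
  #|[set v | c v == t]| <= #|[set i : 'I_n | valley sigma i]|.
Proof.
move=> Ha Ht; eapply extreme_le; first exact: (Ha); move=> i Hi.
rewrite /valley; apply/andP; split.
- case: (posnP i) => [->//|Hi0]; apply/orP; right.
  have Hj : i.-1 < n by move: (ltn_ord i); lia.
  have Hji : (Ordinal Hj).+1 < n by rewrite /= prednK.
  have Eji : Ordinal Hji = i by apply: val_inj; rewrite /= prednK.
  have := asc_full Ha (i:=Ordinal Hj) (j:=i).
  rewrite /consec /= prednK // eqxx => /(_ isT).
  rewrite /edge_ok Hi => /orP[/andP[_ H]|/andP[H _]].
  + by move: (Ht (c (sigma (Ordinal Hj)))); rewrite leqNgt H.
  + by rewrite (@wlE n sigma (Ordinal Hj) Hji) Eji -leqNgt ltnW.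
- case: (ltngtP i.+1 n) => Hin; last by apply/orP; left; apply/eqP; lia.
  + apply/orP; right.
    have := asc_full Ha (i:=i) (j:=Ordinal Hin).
    rewrite /consec /= eqxx => /(_ isT).
    rewrite /edge_ok Hi => /orP[/andP[H _]|/andP[_ H]].
    * by rewrite (@wlE n sigma i Hin).
    * by move: (Ht (c (sigma (Ordinal Hin)))); rewrite leqNgt H.
  + by move: (ltn_ord i); lia.
Qed.

Lemma coeff_zero n (sigma : 'S_n) (s : seq nat) (pi : 'S_(size s)) (t0 : 'I_(size s)) (B : nat) :
  (forall c : {ffun 'I_n -> 'I_(size [seq nth 0 s (pi j) | j <- enum 'I_(size s)])},
     asc sigma c = n.-1 ->
     forall t : 'I_(size [seq nth 0 s (pi j) | j <- enum 'I_(size s)]),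
       (t : nat) = t0 -> #|[set v | c v == t]| <= B) ->
  B < nth 0 s (pi t0) ->
  cqf_coeff sigma n.-1 [seq nth 0 s (pi j) | j <- enum 'I_(size s)] = 0.
Proof.
move=> Hc HB; apply/eqP; rewrite cards_eq0; apply/eqP/setP => c; rewrite !inE.
apply/negbTE/negP => /andP[/andP[_ /eqP Ha] /forallP Hcont].
have Ht : t0 < size [seq nth 0 s (pi j) | j <- enum 'I_(size s)].
  by rewrite size_map size_enum_ord.
have := Hc c Ha (Ordinal Ht) erefl.
rewrite (eqP (Hcont (Ordinal Ht))) /= (nth_map t0) ?size_enum_ord //.
have -> : nth t0 (enum 'I_(size s)) t0 = t0 by rewrite nth_ord_enum.
by rewrite leqNgt HB.
Qed.

Section Witness.
Variables (n : nat) (sigma : 'S_n).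

Definition s0 := [seq #|[set v : 'I_n | bb sigma ((sigma^-1)%g v) == j]| | j <- iota 0 n.*2.+1].

Lemma size_s0 : size s0 = n.*2.+1.
Proof. by rewrite size_map size_iota. Qed.

Lemma bb_lt (v : 'I_n) : bb sigma ((sigma^-1)%g v) < size s0.
Proof.
rewrite size_s0; have [/andP[_ H] _] := bb_inv sigma (ltn_ord ((sigma^-1)%g v)).
move: (ltn_ord ((sigma^-1)%g v)) H; lia.
Qed.

Definition c0 : {ffun 'I_n -> 'I_(size s0)} := [ffun v => Ordinal (bb_lt v)].

Lemma c0E (i : 'I_n) : (c0 (sigma i) : nat) = bb sigma i.
Proof. by rewrite ffunE /= permK. Qed.

Lemma nth_s0 (j : nat) : j < size s0 -> nth 0 s0 j = #|[set v : 'I_n | bb sigma ((sigma^-1)%g v) == j]|.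
Proof.
move=> Hj; rewrite /s0 (nth_map 0); last by move: Hj; rewrite size_s0 size_iota.
by rewrite nth_iota // -size_s0.
Qed.

Lemma c0_in : 0 < cqf_coeff sigma n.-1 s0.
Proof.
apply/card_gt0P; exists c0; rewrite inE; apply/andP; split; first (apply/andP; split).
- apply/forallP => i; apply/forallP => j; apply/implyP => /eqP Hij.
  apply/eqP => /(congr1 (@nat_of_ord _)); rewrite !c0E Hij.
  have h : i.+1 < n by rewrite -Hij.
  have := bb_strict sigma h; case: (wl sigma i) => H E; move: H; rewrite E ltnn //.
- apply/eqP; apply: asc_all => i j /eqP Hij.
  have h : i.+1 < n by rewrite -Hij.
  have Ej : j = Ordinal h by apply: val_inj.
  rewrite /edge_ok !c0E Ej.
  have := bb_strict sigma h; rewrite (@wlE n sigma i h).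
  case: (ltngtP (sigma i) (sigma (Ordinal h))) => Hs H.
  + by rewrite H.
  + by rewrite H orbT.
  + exfalso; have := perm_inj (val_inj Hs) => /(congr1 val) /=; lia.
- apply/forallP => j; rewrite nth_s0 //; apply/eqP; apply: eq_card => v; rewrite !inE ffunE.
  by [].
Qed.

End Witness.

Lemma nth_mid (s1 x s2 : seq bool) k : k < size x ->
  nth false (s1 ++ x ++ s2) (size s1 + k) = nth false x k.
Proof. by move=> H; rewrite nth_cat ltnNge leq_addr /= addKn nth_cat H. Qed.

Section Extract.
Variables (n : nat) (sigma : 'S_n).

Lemma gadget_mid k : k.+3 < n -> wl sigma k -> wl sigma k.+1 -> ~~ wl sigma k.+2 ->
  taken sigma k.+2.
Proof.
move=> Hk H0 H1 H2.
rewrite takenE //; apply/andP; split.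
  rewrite /turn /=.
  have -> : k.+2 < n.-1 by apply/idP; lia.
  by rewrite H1 (negbTE H2).
apply/negP => /(@taken_turn n sigma _); rewrite /turn /= H0 H1 /=.
by rewrite andbF.
Qed.

Lemma extract :
  [|| infix [:: true; true; false; false] (adpat sigma),
      prefix [:: true; false; false] (adpat sigma)
    | suffix [:: true; true; false] (adpat sigma)] ->
  3 < n /\ exists j0, [/\ j0 < n, taken sigma j0 & ~~ turn sigma j0.+1].
Proof.
have Hs := size_adpat sigma.
case/or3P.
- case/infixP => [s1 [s2 Hw]].
  have Hsz : n.-1 = size s1 + 4 + size s2 by rewrite -Hs Hw !size_cat /=; lia.
  have Ew k : k < 4 -> wl sigma (size s1 + k) = nth false [:: true; true; false; false] k.
    by move=> Hk; rewrite /wl Hw nth_mid.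
  split; first by lia.
  exists (size s1).+2; split; first by lia.
  + apply: gadget_mid; first by lia.
    * by have := Ew 0 isT; rewrite addn0.
    * by have := Ew 1 isT; rewrite addn1.
    * by have := Ew 2 isT; rewrite addn2 => ->.
  + rewrite /turn; apply/negP => /andP[_].
    by have := Ew 2 isT; have := Ew 3 isT; rewrite addn2 addn3 /= => -> ->.
- case/prefixP => [s Hw].
  have Hsz : n.-1 = 3 + size s by rewrite -Hs Hw.
  have E0 : wl sigma 0 = true by rewrite /wl Hw.
  have E1 : wl sigma 1 = false by rewrite /wl Hw.
  have E2 : wl sigma 2 = false by rewrite /wl Hw.
  split; first by lia.
  exists 1; split; first by lia.
  + rewrite takenE //= andbT /turn /= E0 E1 andbT /=; apply/idP; lia.
  + by rewrite /turn /= E1 E2 andbF.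
- case/suffixP => [s Hw].
  have Hsz : n.-1 = size s + 3 by rewrite -Hs Hw size_cat.
  have Ew k : k < 3 -> wl sigma (size s + k) = nth false [:: true; true; false] k.
    by move=> Hk; rewrite /wl Hw -(cats0 [:: true; true; false]) nth_mid.
  split; first by lia.
  exists (size s).+2; split; first by lia.
  + rewrite takenE //; apply/andP; split.
      rewrite /turn /=.
      have -> : (size s).+2 < n.-1 by apply/idP; lia.
      by have := Ew 1 isT; have := Ew 2 isT; rewrite addn1 addn2 /= => -> ->.
    apply/negP => /(@taken_turn n sigma _); rewrite /turn /=.
    have := Ew 0 isT; have := Ew 1 isT; rewrite addn0 addn1 /= => -> ->.
    by rewrite andbF.
  + by rewrite turn_ge //; lia.
Qed.

End Extract.

Lemma card_pre n (sigma : 'S_n) (P : pred 'I_n) :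
  #|[set v | P ((sigma^-1)%g v)]| = #|[set i | P i]|.
Proof.
rewrite -(card_imset [set i | P i] (@perm_inj _ sigma)); apply: eq_card => v.
rewrite inE; apply/idP/imsetP => [H|[i]].
  by exists ((sigma^-1)%g v); rewrite ?inE ?permKV.
by rewrite inE => Hi ->; rewrite permK.
Qed.

Lemma card_sum n (P : pred 'I_n) : #|[set i | P i]| = \sum_(i < n) P i.
Proof. by rewrite -sum1dep_card big_mkcond; apply: eq_bigr => i _; case: (P i). Qed.

Theorem corollary4p6 (n : nat) (sigma : 'S_n) :
  [|| infix [:: true; true; false; false] (adpat sigma),
      prefix [:: true; false; false] (adpat sigma)
    | suffix [:: true; true; false] (adpat sigma)] ->
  ~ cqf_symmetric sigma.
Proof.
move=> H Hsym.
have [Hn [j0 [Hj0 Htj Htu]]] := extract H.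
have [N EN] : exists N, n = N.+2 by exists n.-2; lia.
subst n.
set m := nth 0 (s0 sigma) N.+2.
have Hlv : N.+2 < size (s0 sigma) by rewrite size_s0; lia.
have Hm : m = 1 + \sum_(i < N.+2) taken sigma i.
  rewrite /m nth_s0 // (card_pre sigma (fun i => bb sigma i == N.+2)) card_sum.
  by rewrite -(@sum_zero _ sigma N.+1 erefl).
set P := #|[set i : 'I_N.+2 | peak sigma i]|.
set V := #|[set i : 'I_N.+2 | valley sigma i]|.
have HPV : P + V < 2 * m.
  rewrite /P /V !card_sum -big_split /= (@PV _ sigma N erefl) //.
  have := @turn_taken_ineq _ sigma N.+1 j0 erefl Hj0 Htj Htu; lia.
have Hpos := c0_in sigma.
set lv : 'I_(size (s0 sigma)) := Ordinal Hlv.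
have Htop : (size (s0 sigma)).-1 < size (s0 sigma) by rewrite size_s0.
have Hbot : 0 < size (s0 sigma) by rewrite size_s0.
have [HP|HV] : P < m \/ V < m by lia.
- set t0 : 'I_(size (s0 sigma)) := Ordinal Htop.
  have := Hsym (N.+2).-1 (s0 sigma) (tperm lv t0).
  rewrite (@coeff_zero _ sigma (s0 sigma) (tperm lv t0) t0 P).
  + by move=> E; move: Hpos; rewrite E.
  + move=> c Ha t Ht; apply: top_peak => // x.
    have Es : size [seq nth 0 (s0 sigma) (tperm lv t0 j) | j <- enum 'I_(size (s0 sigma))]
      = size (s0 sigma) by rewrite size_map size_enum_ord.
    have Ht0 : (t0 : nat) = (size (s0 sigma)).-1 by [].
    have := ltn_ord x; move: (nat_of_ord x) => k Hk; rewrite Es in Hk; rewrite Ht Ht0; lia.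
  + by rewrite (tpermR lv t0).
- set t0 : 'I_(size (s0 sigma)) := Ordinal Hbot.
  have := Hsym (N.+2).-1 (s0 sigma) (tperm lv t0).
  rewrite (@coeff_zero _ sigma (s0 sigma) (tperm lv t0) t0 V).
  + by move=> E; move: Hpos; rewrite E.
  + move=> c Ha t Ht; apply: bot_valley => // x.
    by rewrite Ht.
  + by rewrite (tpermR lv t0).
Qed.
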